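(* Consider the continuous-time system $\dot x=Ax+Bu+Lf(t,z)$, $z=Hx$, with $A,B$ unknown, $L\in\mathbb{R}^{n\times p}$ and $H\in\mathbb{R}^{p\times n}$ known, and data $U_0,X_0,X_1,F_0$ (with $X_1$ containing sampled state derivatives) satisfying $X_1=AX_0+BU_0+LF_0$. Suppose there exists $Y\in\mathbb{R}^{T\times n}$ such that $X_0Y$ is symmetric positive definite, $Y^\top(X_1-LF_0)^\top+(X_1-LF_0)Y\prec 0$, and $L+X_0YH^\top=0$. Then with $K=U_0Y(X_0Y)^{-1}$ the origin of the closed-loop system $\dot x=(A+BK)x+Lf(t,Hx)$ is globally uniformly asymptotically stable for every passive nonlinearity $f$, i.e. every $f:\mathbb{R}\times\mathbb{R}^p\to\mathbb{R}^p$ (piecewise continuous in $t$, locally Lipschitz in $z$) with $z^\top f(t,z)\ge 0$ for all $t,z$.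
   Context: Data: $U_0=[u(t_0)\cdots u(t_{T-1})]$, $X_0=[x(t_0)\cdots x(t_{T-1})]$, $X_1=[\dot x(t_0)\cdots\dot x(t_{T-1})]$, $F_0=[f(t_0,z(t_0))\cdots f(t_{T-1},z(t_{T-1}))]$ from an experiment on the system. *)

(* Defs.v *)
From HB Require Import structures.
From mathcomp Require Import all_boot all_order all_algebra.
From mathcomp Require Import all_classical all_reals all_analysis.
Set Implicit Arguments. Unset Strict Implicit. Unset Printing Implicit Defensive.
Import Order.TTheory GRing.Theory Num.Theory.
Import numFieldNormedType.Exports.
Local Open Scope classical_set_scope.
Local Open Scope ring_scope.

Section Defs.
Variable R : realType.

Definition locally_finite_set (S : set R) : Prop :=
  forall a b : R, finite_set (S `&` `[a, b]).

Definition sym_posdef (n : nat) (M : 'M[R]_n) : Prop :=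
  M^T = M /\ forall v : 'cV[R]_n, v != 0 -> 0 < (v^T *m M *m v) 0 0.
Definition negdef (n : nat) (M : 'M[R]_n) : Prop :=
  forall v : 'cV[R]_n, v != 0 -> (v^T *m M *m v) 0 0 < 0.

Definition passive (p : nat) (f : R -> 'cV[R]_p -> 'cV[R]_p) : Prop :=
  forall t z, 0 <= (z^T *m f t z) 0 0.

Definition piecewise_continuous_in_t (p : nat) (f : R -> 'cV[R]_p -> 'cV[R]_p) : Prop :=
  forall z, exists S : set R, locally_finite_set S /\
    forall t, ~ S t -> {for t, continuous (fun s => f s z)}.

Definition loc_lipschitz_in_z (p : nat) (f : R -> 'cV[R]_p -> 'cV[R]_p) : Prop :=
  forall t (z0 : 'cV[R]_p), exists r : R, exists c : R, 0 < r /\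
    forall z1 z2, `|z1 - z0| < r -> `|z2 - z0| < r ->
      `|f t z1 - f t z2| <= c * `|z1 - z2|.

(* x : [t0, +oo) -> R^n is a solution of xdot = F(t, x): continuous on
   [t0, +oo), and differentiable with xdot(t) = F(t, x(t)) at every t > t0
   outside a locally finite set of times (covers piecewise-C^1 solutions
   of ODEs with right-hand sides piecewise continuous in t). *)
Definition ode_solution (n : nat) (F : R -> 'cV[R]_n -> 'cV[R]_n)
    (t0 : R) (x : R -> 'cV[R]_n) : Prop :=
  {within `[t0, +oo[, continuous x} /\
  exists S : set R, locally_finite_set S /\
    forall t, t0 < t -> ~ S t -> is_derive t 1 x (F t (x t)).

(* Global uniform asymptotic stability of the origin (Khalil, Def. 4.4),
   with initial times t0 >= 0. *)
Definition GUAS (n : nat) (F : R -> 'cV[R]_n -> 'cV[R]_n) : Prop :=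
  (forall t, 0 <= t -> F t 0 = 0) /\
  (forall eps : R, 0 < eps -> exists delta : R, 0 < delta /\
     forall t0 x, 0 <= t0 -> ode_solution F t0 x -> `|x t0| < delta ->
       forall t, t0 <= t -> `|x t| < eps) /\
  (forall a : R, 0 < a -> exists c : R, 0 < c /\
     forall t0 x, 0 <= t0 -> ode_solution F t0 x -> `|x t0| < a ->
       forall t, t0 <= t -> `|x t| < c) /\
  (forall r eta : R, 0 < r -> 0 < eta -> exists T : R, 0 <= T /\
     forall t0 x, 0 <= t0 -> ode_solution F t0 x -> `|x t0| < r ->
       forall t, t0 + T <= t -> `|x t| < eta).

End Defs.

(* Main.v *)
Require Import Defs.
From HB Require Import structures.
From mathcomp Require Import all_boot all_order all_algebra.
From mathcomp Require Import all_classical all_reals all_analysis.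
From mathcomp Require Import ring lra.
Import Order.TTheory GRing.Theory Num.Theory.
Import numFieldNormedType.Exports.
Local Open Scope classical_set_scope.
Local Open Scope ring_scope.

Set Implicit Arguments. Unset Strict Implicit. Unset Printing Implicit Defensive.

Section H0.
Variable R : realType.

Lemma cont_sum (T : topologicalType) k (F : 'I_k -> T -> R) x :
  (forall i, {for x, continuous (F i)}) ->
  {for x, continuous (fun y => \sum_(i < k) F i y)}.
Proof.
move=> Fc; rewrite -fct_sumE; elim/big_ind: _ => //.
- exact: cst_continuous.
- by move=> f g fc gc; apply: continuousD.
Qed.

Definition qf n (M : 'M[R]_n) (c : 'I_n -> R) :=
  \sum_i \sum_j c i * M i j * c j.

Lemma qfE n (M : 'M[R]_n) (v : 'cV[R]_n) :
  (v^T *m M *m v) 0 0 = qf M (fun i => v i 0).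
Proof.
rewrite mxE /qf exchange_big /=; apply: eq_bigr => j _.
rewrite mxE big_distrl /=; apply: eq_bigr => i _; by rewrite !mxE.
Qed.

Lemma qf_cont (T : topologicalType) n (M : 'M[R]_n) (c : 'I_n -> T -> R) x :
  (forall i, {for x, continuous (c i)}) ->
  {for x, continuous (fun y => qf M (fun i => c i y))}.
Proof.
move=> cc; apply: cont_sum => i; apply: cont_sum => j.
apply: continuousM; last exact: cc.
apply: continuousM; first exact: cc.
exact: cst_continuous.
Qed.

Lemma norm_tr n (v : 'cV[R]_n) : `|v^T| = `|v|.
Proof.
rewrite /Num.Def.normr /= !mx_normrE; apply/le_anti/andP; split.
- apply: bigmax_le; first exact: bigmax_ge_id.
  move=> -[i j] _; rewrite mxE /=.
  exact: (le_bigmax _ _ (j, i)).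
- apply: bigmax_le; first exact: bigmax_ge_id.
  move=> -[i j] _ /=.
  apply: le_trans (le_bigmax _ _ (j, i)); by rewrite mxE.
Qed.

Lemma qfZ n (M : 'M[R]_n) (a : R) c :
  qf M (fun i => a * c i) = a ^+ 2 * qf M c.
Proof.
rewrite /qf mulr_sumr; apply: eq_bigr => i _; rewrite mulr_sumr.
by apply: eq_bigr => j _; ring.
Qed.

Lemma posdef_lb n (M : 'M[R]_n) :
  (forall v : 'cV[R]_n, v != 0 -> 0 < (v^T *m M *m v) 0 0) ->
  exists2 c : R, 0 < c & forall v : 'cV[R]_n, c * `|v| ^+ 2 <= (v^T *m M *m v) 0 0.
Proof.
move=> Mpos.
case: n M Mpos => [|n] M Mpos.
  exists 1 => // v; rewrite (flatmx0 v) normr0 expr2 mulr0 mulr0.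
  by rewrite !mxE big_ord0.
pose g (w : 'rV[R]_n.+1) := qf M (fun i => w 0 i).
pose A := [set w : 'rV[R]_n.+1 | `|w| = 1].
have gc : continuous g.
  move=> w; apply: qf_cont => i; exact: coord_continuous.
have A0 : A !=set0.
  pose w : 'rV[R]_n.+1 := const_mx 1.
  have wn0 : `|w| != 0.
    rewrite normr_eq0; apply/eqP => /matrixP /(_ 0 0); rewrite !mxE => /eqP.
    by rewrite oner_eq0.
  exists (`|w|^-1 *: w); rewrite /A /= mx_normZ normfV normr_id mulVf //.
have cA : compact A.
  apply: bounded_closed_compact.
    rewrite /= /bounded_near; near=> r => w /= ->.
    by near: r; apply: nbhs_pinfty_ge.
  have -> : A = Num.norm @^-1` [set 1 : R] by [].
  by apply: (continuous_closedP _).1; [exact: norm_continuous|exact: closed_eq].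
have [w0 w0A w0min] := compact_EVT_min A0 cA (continuous_subspaceT gc).
have gpos : 0 < g w0.
  have w0n0 : w0^T != 0.
    apply/eqP => w0z; have w00 : w0 = 0 by rewrite -(trmxK w0) w0z trmx0.
    move: w0A; rewrite inE /A /= w00 normr0 => /eqP.
    by rewrite eq_sym oner_eq0.
  have := Mpos _ w0n0; rewrite qfE /g.
  by congr (0 < qf _ _); apply: funext => i; rewrite mxE.
exists (g w0) => // v.
have [->|vn0] := eqVneq v 0.
  rewrite normr0 expr2 mulr0 mulr0 qfE /qf.
  by rewrite big1 // => i _; rewrite big1 // => j _; rewrite mxE !mul0r.
have nv : 0 < `|v| by rewrite normr_gt0.
have wA : (`|v|^-1 *: v^T) \in A.
  by rewrite inE /A /= mx_normZ norm_tr normfV normr_id mulVf // gt_eqF.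
have := w0min _ wA; rewrite /g qfE.
have -> : (fun i => (`|v|^-1 *: v^T) 0 i) = (fun i => `|v|^-1 * v i 0).
  by apply: funext => i; rewrite !mxE.
rewrite qfZ => h.
have ivp : 0 < `|v|^-1 by rewrite invr_gt0.
rewrite -(ler_pM2l (exprn_gt0 2 ivp)).
have -> : `|v|^-1 ^+ 2 * (g w0 * `|v| ^+ 2) = g w0.
  by rewrite mulrCA -exprMn mulVf ?gt_eqF // expr1n mulr1.
exact: h.
Unshelve. all: by end_near.
Qed.

End H0.

Section H1.
Variable R : realType.

Lemma itvoo (a b x : R) : x \in `]a, b[ -> a < x /\ x < b.
Proof. by rewrite in_itv /= => /andP. Qed.

Lemma noincr0 (W dW : R -> R) a b : a <= b ->
  {within `[a, b], continuous W} ->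
  (forall t, a < t -> t < b -> is_derive t 1 W (dW t) /\ dW t <= 0) ->
  W b <= W a.
Proof.
move=> ab Wc Wd; case: (ltgtP a b) ab => // [altb|->] _; last by [].
have [c cab] := MVT altb (fun x xab => (Wd x (itvoo xab).1 (itvoo xab).2).1) Wc.
move=> e; rewrite -subr_le0 e; apply: mulr_le0_ge0.
  exact: (Wd c (itvoo cab).1 (itvoo cab).2).2.
by rewrite subr_ge0 ltW.
Qed.

Lemma noincrN (W dW : R -> R) (S : set R) N : forall (s : seq R) a b,
  (size s <= N)%N -> a <= b ->
  (forall t, a < t -> t < b -> S t -> t \in s) ->
  {within `[a, b], continuous W} ->
  (forall t, a < t -> t < b -> ~ S t -> is_derive t 1 W (dW t) /\ dW t <= 0) ->
  W b <= W a.
Proof.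
elim: N => [|N IH] s a b sN ab sS Wc Wd.
  apply: (noincr0 ab Wc) => t hat tb; apply: Wd => // St.
  by move: (sS t hat tb St); case: s sN {sS}.
have [[t [hat tb St]]|noS] := pselect (exists t, [/\ a < t, t < b & S t]); last first.
  apply: (noincr0 ab Wc) => t hat tb; apply: Wd => // St.
  by apply: noS; exists t.
have ts : t \in s by exact: sS.
pose s' := seq.filter (predC1 t) s.
have s'N : (size s' <= N)%N.
  rewrite -ltnS; apply: leq_trans sN.
  rewrite size_filter -(count_predC (predC1 t)) -addn1 leq_add2l.
  by rewrite -has_count; apply/hasP; exists t => //=; rewrite negbK.
have sub1 : `[a, t] `<=` `[a, b] by apply: subset_itv; rewrite bnd_simp // ltW.
have sub2 : `[t, b] `<=` `[a, b] by apply: subset_itv; rewrite bnd_simp // ltW.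
apply: (@le_trans _ _ (W t)).
  apply: (IH s' t b s'N (ltW tb)).
  - move=> u tu ub Su; rewrite mem_filter /= (gt_eqF tu) /=.
    by apply: sS => //; apply: lt_trans tu.
  - exact: continuous_subspaceW Wc.
  - by move=> u tu ub; apply: Wd => //; apply: lt_trans tu.
apply: (IH s' a t s'N (ltW hat)).
- move=> u au ut Su; rewrite mem_filter /= (lt_eqF ut) /=.
  by apply: sS => //; apply: lt_trans tb.
- exact: continuous_subspaceW Wc.
- by move=> u au ut; apply: Wd => //; apply: lt_trans tb.
Qed.

Lemma noincr (W dW : R -> R) (S : set R) a b :
  finite_set (S `&` `[a, b]) -> a <= b ->
  {within `[a, b], continuous W} ->
  (forall t, a < t -> t < b -> ~ S t -> is_derive t 1 W (dW t) /\ dW t <= 0) ->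
  W b <= W a.
Proof.
move=> /finite_seqP [s se] ab; apply: (@noincrN W dW S (size s) s) => //.
move=> t hat tb St.
have : (S `&` `[a, b]) t by split => //; rewrite /= in_itv /= !ltW.
by rewrite se.
Qed.

End H1.

Section H2.
Variable R : realType.

Definition bf n (M : 'M[R]_n) (c e : 'I_n -> R) :=
  \sum_i \sum_j c i * M i j * e j.

Lemma bfE n (M : 'M[R]_n) (v w : 'cV[R]_n) :
  (v^T *m M *m w) 0 0 = bf M (fun i => v i 0) (fun i => w i 0).
Proof.
rewrite mxE /bf exchange_big /=; apply: eq_bigr => j _.
rewrite mxE big_distrl /=; apply: eq_bigr => i _; by rewrite !mxE.
Qed.

Lemma comp_derive n (x : R -> 'cV[R]_n) (t : R) (dx : 'cV[R]_n) i :
  is_derive t 1 x dx -> is_derive t 1 (fun s => x s i 0) (dx i 0).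
Proof.
move=> [xd xv]; have xd' := (derivable_mxP x t 1).1 xd i 0.
apply: DeriveDef => //.
by rewrite -xv derive_mx // mxE.
Qed.

Lemma bf_derive n (M : 'M[R]_n) (c e : 'I_n -> R -> R) (dc de : 'I_n -> R) (t : R) :
  (forall i, is_derive t 1 (c i) (dc i)) ->
  (forall i, is_derive t 1 (e i) (de i)) ->
  is_derive t 1 (fun s => bf M (fun i => c i s) (fun i => e i s))
    (bf M dc (fun i => e i t) + bf M (fun i => c i t) de).
Proof.
move=> cd ed.
have -> : (fun s => bf M (fun i => c i s) (fun i => e i s)) =
  \sum_i \sum_j ((c i * cst (M i j)) * e j).
  apply: funext => s; rewrite /bf fct_sumE; apply: eq_bigr => i _.
  by rewrite fct_sumE.
have D : forall i j, is_derive t 1 ((c i * cst (M i j)) * e j)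
   ((c i * cst (M i j)) t *: de j + e j t *: (c i t *: 0 + cst (M i j) t *: dc i)).
  move=> i j; exact: is_deriveM (is_deriveM (cd i) (is_derive_cst _ _ _)) (ed j).
have D2 := @is_derive_sum _ _ _ n _ t 1 _ (fun i => @is_derive_sum _ _ _ n _ t 1 _ (D i)).
apply: is_derive_eq D2 _.
rewrite /bf -big_split /=; apply: eq_bigr => i _.
rewrite -big_split /=; apply: eq_bigr => j _.
change (c i t * M i j * de j + e j t * (c i t * 0 + M i j * dc i) = dc i * M i j * e j t + c i t * M i j * de j); ring.
Qed.

Lemma qf_derive n (M : 'M[R]_n) (x : R -> 'cV[R]_n) (t : R) (dx : 'cV[R]_n) :
  is_derive t 1 x dx ->
  is_derive t 1 (fun s => ((x s)^T *m M *m x s) 0 0)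
    ((dx^T *m M *m x t) 0 0 + ((x t)^T *m M *m dx) 0 0).
Proof.
move=> xd.
have -> : (fun s => ((x s)^T *m M *m x s) 0 0) =
   (fun s => bf M (fun i => x s i 0) (fun i => x s i 0)).
  by apply: funext => s; rewrite bfE.
rewrite !bfE.
by apply: bf_derive => i; apply: comp_derive.
Qed.

End H2.

Section H3.
Variable R : realType.

Lemma lin_derive (a s : R) : is_derive s 1 (fun u : R => a * u) a.
Proof.
have h : is_derive s 1 (fun u : R => a *: u) (a *: 1).
  apply: is_deriveZ; exact: is_derive_id.
by rewrite /GRing.scale /= mulr1 in h.
Qed.

Lemma expa_derive (a s : R) : is_derive s 1 (fun u => expR (a * u)) (a * expR (a * s)).
Proof.
have d1 : derivable (fun u : R => a * u) s 1 by have [] := lin_derive a s.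
have d2 : derivable expR (a * s) 1 by have [] := is_derive_expR (a * s).
apply: DeriveDef.
  apply: diff_derivable; apply: differentiable_comp.
    exact/derivable1_diffP.
  exact/derivable1_diffP.
rewrite -derive1E.
have -> : (fun u => expR (a * u)) = expR \o (fun u => a * u) by [].
rewrite derive1_comp // !derive1E (@derive_val _ _ _ _ _ _ _ (is_derive_expR _)).
by rewrite (@derive_val _ _ _ _ _ _ _ (lin_derive a s)) mulrC.
Qed.


Lemma coord_le m k (v : 'M[R]_(m, k)) i j : `|v i j| <= `|v|.
Proof.
rewrite [X in _ <= X]/Num.Def.normr /= mx_normrE.
exact: (le_bigmax _ _ (i, j)).
Qed.

Lemma qf_ub n (M : 'M[R]_n) : exists2 C : R, 0 < C &
  forall v : 'cV[R]_n, (v^T *m M *m v) 0 0 <= C * `|v| ^+ 2.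
Proof.
exists (1 + \sum_i \sum_j `|M i j|).
  apply: (@lt_le_trans _ _ 1) => //; rewrite lerDl.
  by apply: sumr_ge0 => i _; apply: sumr_ge0 => j _.
move=> v; rewrite qfE /qf mulrDl mul1r.
apply: (@le_trans _ _ (\sum_i \sum_j `|M i j| * `|v| ^+ 2)).
  apply: ler_sum => i _; apply: ler_sum => j _.
  apply: le_trans (ler_norm _) _; rewrite !normrM.
  rewrite expr2 mulrCA mulrA; apply: ler_pM => //.
    by apply: ler_pM => //; exact: coord_le.
  exact: coord_le.
have -> : \sum_i \sum_j `|M i j| * `|v| ^+ 2 = (\sum_i \sum_j `|M i j|) * `|v| ^+ 2.
  by rewrite mulr_suml; apply: eq_bigr => i _; rewrite mulr_suml.
by apply: ler_wpDl; rewrite // exprn_ge0.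
Qed.


Lemma qcont n (P : 'M[R]_n) : continuous (fun v : 'cV[R]_n => (v^T *m P *m v) 0 0).
Proof.
have -> : (fun v : 'cV[R]_n => (v^T *m P *m v) 0 0) = (fun v => qf P (fun i => v i 0)).
  by apply: funext => v; rewrite qfE.
move=> v; apply: qf_cont => i; exact: coord_continuous.
Qed.

Lemma core n (F : R -> 'cV[R]_n -> 'cV[R]_n) (P : 'M[R]_n) (c1 c2 a : R) :
  (forall v : 'cV[R]_n, c1 * `|v| ^+ 2 <= (v^T *m P *m v) 0 0) ->
  (forall v : 'cV[R]_n, (v^T *m P *m v) 0 0 <= c2 * `|v| ^+ 2) ->
  (forall t (v : 'cV[R]_n), 0 < t ->
     ((F t v)^T *m P *m v) 0 0 + (v^T *m P *m F t v) 0 0 <= - a * (v^T *m P *m v) 0 0) ->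
  forall t0 x, 0 <= t0 -> ode_solution F t0 x -> forall t, t0 <= t ->
  c1 * `|x t| ^+ 2 <= expR (- a * (t - t0)) * (c2 * `|x t0| ^+ 2).
Proof.
move=> lb ub dF t0 x t00 [xc [S [Sfin Sd]]] t t0t.
pose q (v : 'cV[R]_n) := (v^T *m P *m v) 0 0.
pose W := (fun u => expR (a * u)) * (fun s => q (x s)).
pose dW (u : R) := expR (a * u) *: (((F u (x u))^T *m P *m x u) 0 0 + ((x u)^T *m P *m F u (x u)) 0 0)
   + q (x u) *: (a * expR (a * u)).
have Wle : W t <= W t0.
  apply: (@noincr R W dW S t0 t (Sfin t0 t) t0t).
  - have xc' : {within `[t0, t], continuous x}.
      apply: continuous_subspaceW xc => u /=; rewrite !in_itv /= => /andP[-> _] //.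
    have ec : continuous (fun u : R => expR (a * u)).
      move=> u; apply: differentiable_continuous.
      by apply/derivable1_diffP; have [] := expa_derive a u.
    have e1 : {within `[t0, t], continuous (fun u => expR (a * u))} := continuous_subspaceT ec.
    have e2 : {within `[t0, t], continuous (fun s => q (x s))}.
      move=> u; apply: (@continuous_comp (subspace `[t0, t]) _ _ x q u (xc' u)); exact: qcont.
    move=> u; exact: continuousM (e1 u) (e2 u).
  - move=> u t0u ut Su; split.
      apply: is_deriveM; first exact: expa_derive.
      exact: qf_derive (Sd u t0u Su).
    rewrite /dW /GRing.scale /=.
    have := dF u (x u) (le_lt_trans t00 t0u); rewrite -/(q (x u)) => h.
    have ep := expR_gt0 (a * u).
    have -> : q (x u) * (a * expR (a * u)) = expR (a * u) * (a * q (x u)) by ring.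
    rewrite -mulrDr; apply: mulr_ge0_le0; first exact: ltW.
    move: h; rewrite mulNr; set D := (_ + _); set E := a * q (x u); lra.
have : expR (a * t) * q (x t) <= expR (a * t0) * q (x t0) by [].
move=> h.
have ht : q (x t) <= expR (- a * (t - t0)) * q (x t0).
  rewrite -(ler_pM2l (expR_gt0 (a * t))) mulrA -expRD.
  by have -> : a * t + - a * (t - t0) = a * t0 by ring.
apply: le_trans (lb _) _; apply: le_trans ht _.
by rewrite ler_pM2l ?expR_gt0 //; exact: ub.
Qed.

End H3.

Section H4.
Variable R : realType.

Lemma fin_bound (c1 c2 e y0 y B : R) : 0 < c1 -> 0 <= c2 -> 0 <= e -> 0 <= y -> 0 <= y0 ->
  c1 * y ^+ 2 <= e * (c2 * y0 ^+ 2) -> e * (c2 * y0 ^+ 2) < c1 * B ^+ 2 -> 0 < B -> y < B.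
Proof.
move=> c1p c2p ep yp y0p h1 h2 Bp; rewrite ltNge; apply/negP => By.
have : B ^+ 2 <= y ^+ 2 by rewrite ler_pXn2r // ?ltW // ?nnegrE ?ltW.
move=> h3; have : c1 * B ^+ 2 <= c1 * y ^+ 2 by rewrite ler_pM2l.
lra.
Qed.

Lemma key_bound (c1 c2 e y0 B d : R) : 0 <= c2 -> 0 <= e -> e <= 1 -> 0 <= y0 ->
  0 < B -> 0 < d -> c2 * d ^+ 2 < c1 -> y0 < B * d -> e * (c2 * y0 ^+ 2) < c1 * B ^+ 2.
Proof.
move=> c2p ep e1 y0p Bp dp cd yB.
have h1 : y0 ^+ 2 <= (B * d) ^+ 2 by rewrite ler_pXn2r // ?nnegrE ?ltW // mulr_gt0.
have h2 : c2 * y0 ^+ 2 <= c2 * (B * d) ^+ 2 by rewrite ler_wpM2l.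
have h3 : c2 * (B * d) ^+ 2 < c1 * B ^+ 2.
  by rewrite exprMn mulrCA [c1 * _]mulrC ltr_pM2l ?exprn_gt0.
have h4 : e * (c2 * y0 ^+ 2) <= c2 * y0 ^+ 2.
  by rewrite ler_piMl // mulr_ge0 // exprn_ge0.
lra.
Qed.

Lemma guas_of n (F : R -> 'cV[R]_n -> 'cV[R]_n) (c1 c2 a : R) :
  0 < c1 -> 0 < c2 -> 0 < a ->
  (forall t, 0 <= t -> F t 0 = 0) ->
  (forall t0 x, 0 <= t0 -> ode_solution F t0 x -> forall t, t0 <= t ->
    c1 * `|x t| ^+ 2 <= expR (- a * (t - t0)) * (c2 * `|x t0| ^+ 2)) ->
  GUAS F.
Proof.
move=> c1p c2p ap F0 dec.
pose d := c1 / (c1 + c2).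
have dp : 0 < d by rewrite divr_gt0 // addr_gt0.
have dE : d * (c1 + c2) = c1 by rewrite /d mulfVK // gt_eqF // addr_gt0.
have cd : c2 * d ^+ 2 < c1.
  have d1 : d < 1 by rewrite /d ltr_pdivrMr ?addr_gt0 // mul1r ltrDl.
  have : c2 * d < c1 by nra.
  nra.
have eb t0 t : t0 <= t -> expR (- a * (t - t0)) <= 1.
  move=> h; rewrite expR_le1 mulNr oppr_le0; apply: mulr_ge0; [exact: ltW | by rewrite subr_ge0].
have stab : forall B : R, 0 < B ->
    forall t0 x, 0 <= t0 -> ode_solution F t0 x -> `|x t0| < B * d ->
    forall t, t0 <= t -> `|x t| < B.
  move=> B Bp t0 x t00 sol x0 t t0t.
  apply: (fin_bound c1p (ltW c2p) _ _ _ (dec t0 x t00 sol t t0t)) => //.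
  exact: key_bound (ltW c2p) (ltW (expR_gt0 _)) (eb _ _ t0t) _ Bp dp cd x0.
split => //; split.
  move=> e ep; exists (e * d); split; first by rewrite mulr_gt0.
  exact: stab.
split.
  move=> r rp; exists (r / d); split; first by rewrite divr_gt0.
  move=> t0 x t00 sol x0; apply: stab => //; first by rewrite divr_gt0.
  by rewrite divfK // gt_eqF.
move=> r eta rp etap.
pose D := c2 * r ^+ 2 + c1 * eta ^+ 2.
have Dp : 0 < D by rewrite addr_gt0 // mulr_gt0 // exprn_gt0.
pose q := c1 * eta ^+ 2 / D.
have qp : 0 < q by rewrite divr_gt0 // mulr_gt0 // exprn_gt0.
have qE : q * D = c1 * eta ^+ 2 by rewrite /q mulfVK // gt_eqF.
have e2p : 0 < c1 * eta ^+ 2 by rewrite mulr_gt0 // exprn_gt0.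
have r2p : 0 < c2 * r ^+ 2 by rewrite mulr_gt0 // exprn_gt0.
have q1 : q <= 1 by rewrite /D in qE; nra.
have qr : q * (c2 * r ^+ 2) < c1 * eta ^+ 2 by rewrite /D in qE; nra.
exists (- ln q / a); split.
  apply: divr_ge0; [rewrite oppr_ge0; exact: ln_le0 | exact: ltW].
move=> t0 x t00 sol x0 t tT.
have t0t : t0 <= t.
  apply: le_trans tT; rewrite lerDl; apply: divr_ge0; [rewrite oppr_ge0; exact: ln_le0 | exact: ltW].
apply: (fin_bound c1p (ltW c2p) _ _ _ (dec t0 x t00 sol t t0t)) => //.
set e := expR _.
have eq : e <= q.
  rewrite /e -[q in _ <= q](lnK qp) ler_expR.
  have : - ln q / a <= t - t0 by move: tT; set z := - ln q / a; lra.
  rewrite ler_pdivrMr // => h; nra.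
have x2 : `|x t0| ^+ 2 <= r ^+ 2.
  by rewrite ler_pXn2r ?nnegrE ?normr_ge0 ?(ltW rp) ?(ltW x0).
have ep : 0 < e by apply: expR_gt0.
have : c2 * `|x t0| ^+ 2 <= c2 * r ^+ 2 by rewrite ler_wpM2l // ltW.
move=> h.
have : e * (c2 * `|x t0| ^+ 2) <= q * (c2 * r ^+ 2).
  apply: ler_pM => //; [exact: ltW|by rewrite mulr_ge0 // ?ltW // exprn_ge0].
lra.
Qed.

End H4.

Section H5.
Variable R : realType.

Lemma posdef_unit n (S : 'M[R]_n) :
  (forall v : 'cV[R]_n, v != 0 -> 0 < (v^T *m S *m v) 0 0) -> S \in unitmx.
Proof.
move=> Sp; rewrite unitmxE unitfE; apply/negP => /det0P [v vn0 vS].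
have vT : v^T != 0 by apply: contraNneq vn0 => h; rewrite -(trmxK v) h trmx0.
have := Sp _ vT; rewrite trmxK vS mul0mx mxE ltxx //.
Qed.

Lemma delta_norm p (i : 'I_p) : `|delta_mx i 0 : 'cV[R]_p| <= 1.
Proof.
rewrite [X in X <= _]/Num.Def.normr /= mx_normrE.
apply: bigmax_le => // -[k l] _; rewrite mxE /=.
by case: (_ && _); rewrite ?normr1 ?normr0.
Qed.

Lemma passive_f0 p (f : R -> 'cV[R]_p -> 'cV[R]_p) :
  loc_lipschitz_in_z f -> passive f -> forall t, f t 0 = 0.
Proof.
move=> fl fp t; apply/matrixP => i j; rewrite (ord1 j) [RHS]mxE.
have [r [c [rp lip]]] := fl t 0.
set y := f t 0 i 0.
have key s : `|s| < r -> 0 <= s * f t (s *: delta_mx i 0) i 0 /\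
    `|f t (s *: delta_mx i 0) i 0 - y| <= `|c| * `|s|.
  move=> sr; set z := s *: delta_mx i 0.
  have zn : `|z| <= `|s|.
    by rewrite /z mx_normZ -[X in _ <= X]mulr1 ler_wpM2l // delta_norm.
  split.
    have := fp t z; congr (0 <= _).
    rewrite /z linearZ /= trmx_delta -scalemxAl -rowE !mxE //.
  have l1 := lip z 0; rewrite !subr0 in l1.
  have := l1 (le_lt_trans zn sr); rewrite normr0 => /(_ rp) h.
  have := coord_le (f t z - f t 0) i 0; rewrite !mxE => hc.
  apply: le_trans hc _; apply: le_trans h _.
  apply: le_trans (ler_norm _) _; by rewrite normrM normr_id ler_wpM2l.
apply/eqP; apply: contraT => yn0.
have yp : 0 < `|y| by rewrite normr_gt0.
pose m := Num.min (r / 2) (`|y| / (2 * (`|c| + 1))).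
have mp : 0 < m by rewrite lt_min divr_gt0 //= divr_gt0 // mulr_gt0 // ltr_pwDr.
have mr : m < r.
  apply: (@le_lt_trans _ _ (r / 2)); first by rewrite /m ge_min lexx.
  lra.
have my : m * (2 * (`|c| + 1)) <= `|y|.
  rewrite -ler_pdivlMr ?mulr_gt0 ?ltr_pwDr //.
  by rewrite ge_min lexx orbT.
have cm : `|c| * m <= `|y| / 2.
  rewrite ler_pdivlMr //; nra.
have mr' : `|m| < r by rewrite gtr0_norm.
have mr'' : `|- m| < r by rewrite normrN gtr0_norm.
case: (ltgtP y 0) yn0 => // yneg _.
  have [h1 h2] := key m mr'; move: h1 h2; set w := f t _ i 0.
  rewrite [`|y|]ltr0_norm // in cm; rewrite [`|m|]gtr0_norm // => h1 h2.
  rewrite ler_norml in h2; case/andP: h2 => h3 h4.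
  nra.
have [h1 h2] := key (- m) mr''; move: h1 h2; set w := f t _ i 0.
rewrite [`|y|]gtr0_norm // in cm; rewrite normrN [`|m|]gtr0_norm // => h1 h2.
rewrite ler_norml in h2; case/andP: h2 => h3 h4.
nra.
Qed.

End H5.

Unset Implicit Arguments.

Theorem mainTheorem3 (R : realType) (n m p T : nat)
    (A : 'M[R]_n) (B : 'M[R]_(n, m)) (L : 'M[R]_(n, p)) (H : 'M[R]_(p, n))
    (U0 : 'M[R]_(m, T)) (X0 X1 : 'M[R]_(n, T)) (F0 : 'M[R]_(p, T))
    (Y : 'M[R]_(T, n)) :
  X1 = A *m X0 + B *m U0 + L *m F0 ->
  sym_posdef (X0 *m Y) ->
  negdef (Y^T *m (X1 - L *m F0)^T + (X1 - L *m F0) *m Y) ->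
  L + X0 *m Y *m H^T = 0 ->
  let K := U0 *m Y *m invmx (X0 *m Y) in
  forall f : R -> 'cV[R]_p -> 'cV[R]_p,
    piecewise_continuous_in_t f -> loc_lipschitz_in_z f -> passive f ->
    GUAS (fun t (x : 'cV[R]_n) => (A + B *m K) *m x + L *m f t (H *m x)).
Proof.
move=> hX; set S := X0 *m Y; set P := invmx S.
move=> [Ssym Spos] Mneg hL K f _ flip fpas.
have Su : S \in unitmx by apply: posdef_unit.
have PS : P *m S = 1%:M by apply: mulVmx.
have SP : S *m P = 1%:M by apply: mulmxV.
have Psym : P^T = P by rewrite /P trmx_inv Ssym.
have SE : X0 *m Y = S by [].
clearbody P S.
have PvT (v : 'cV[R]_n) : (P *m v)^T = v^T *m P by rewrite trmx_mul Psym.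
have Pinj (v : 'cV[R]_n) : v != 0 -> P *m v != 0.
  apply: contraNneq => h; by rewrite -(mul1mx v) -SP -mulmxA h mulmx0.
have Ppos : forall v : 'cV[R]_n, v != 0 -> 0 < (v^T *m P *m v) 0 0.
  move=> v vn0; have := Spos _ (Pinj v vn0).
  by rewrite PvT -!mulmxA (mulmxA S) SP mul1mx.
have [c1 c1p lb] := posdef_lb Ppos.
have [c2 c2p ub] := qf_ub P.
set Acl := A + B *m K.
have AclS : (X1 - L *m F0) *m Y = Acl *m S.
  rewrite hX addrK /Acl /K !mulmxDl -!mulmxA PS mulmx1 SE.
  by [].
set M := S *m Acl^T + Acl *m S.
have ME : Y^T *m (X1 - L *m F0)^T + (X1 - L *m F0) *m Y = M.
  by rewrite -trmx_mul AclS trmx_mul Ssym.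
rewrite ME in Mneg.
pose N := - (P *m M *m P).
have NE (v : 'cV[R]_n) : v^T *m N *m v = - ((P *m v)^T *m M *m (P *m v)).
  by rewrite PvT /N mulmxN mulNmx !mulmxA.
have Npos : forall v : 'cV[R]_n, v != 0 -> 0 < (v^T *m N *m v) 0 0.
  move=> v vn0; rewrite NE mxE oppr_gt0; exact: Mneg (Pinj v vn0).
have [c3 c3p lb3] := posdef_lb Npos.
have LE : L = - (S *m H^T).
  by apply/eqP; rewrite -subr_eq0 opprK hL.
have LtP : L^T *m P = - H.
  by rewrite LE linearN /= trmx_mul trmxK Ssym mulNmx -mulmxA SP mulmx1.
have PL : P *m L = - H^T.
  by rewrite LE mulmxN mulmxA PS mul1mx.
have PMP : P *m M *m P = Acl^T *m P + P *m Acl.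
  rewrite /M mulmxDr mulmxDl !mulmxA PS mul1mx -!mulmxA SP mulmx1.
  by rewrite addrC.
have ident (v : 'cV[R]_n) (fz : 'cV[R]_p) :
    (Acl *m v + L *m fz)^T *m P *m v + v^T *m P *m (Acl *m v + L *m fz) =
    - (v^T *m N *m v) - (fz^T *m (H *m v) + (H *m v)^T *m fz).
  rewrite /N mulmxN mulNmx opprK PMP.
  rewrite linearD /= !trmx_mul mulmxDl mulmxDl mulmxDr mulmxDr mulmxDl.
  rewrite -(mulmxA fz^T L^T P) LtP (mulmxA (v^T *m P) L fz) -(mulmxA v^T P L) PL.
  rewrite !mulmxN !mulNmx !mulmxA opprD.
  by rewrite addrACA.
have addE (Z1 Z2 : 'M[R]_1) : (Z1 + Z2) 0 0 = Z1 0 0 + Z2 0 0 by rewrite mxE.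
have oppE (Z1 : 'M[R]_1) : (- Z1) 0 0 = - Z1 0 0 by rewrite mxE.
have ap : 0 < c3 / c2 by rewrite divr_gt0.
apply: (guas_of c1p c2p ap).
  move=> t _; rewrite !mulmx0 (passive_f0 flip fpas) mulmx0 add0r //.
apply: (core lb ub) => t v _.
rewrite -addE ident addE !oppE addE.
have tE : (f t (H *m v))^T *m (H *m v) = ((H *m v)^T *m f t (H *m v))^T.
  by rewrite trmx_mul trmxK.
have trE (Z1 : 'M[R]_1) : Z1^T 0 0 = Z1 0 0 by rewrite mxE.
rewrite tE trE.
have h1 := fpas t (H *m v).
have h2 := lb3 v.
have h3 : c3 / c2 * (v^T *m P *m v) 0 0 <= c3 * `|v| ^+ 2.
  apply: le_trans (ler_wpM2l (ltW ap) (ub v)) _.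
  by rewrite mulrA divfK ?gt_eqF.
set a1 := (v^T *m N *m v) 0 0 in h2 *.
set a2 := ((H *m v)^T *m f t (H *m v)) 0 0 in h1 *.
set a3 := c3 / c2 * _ in h3 *.
apply: (@le_trans _ _ (- a1)).
  by rewrite lerBlDr lerDl addr_ge0.
by rewrite mulNr lerN2; apply: le_trans h3 h2.
Qed.
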